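(* Let $(I,s,B,k)$ be an instance of Exact Bin Packing. Let $T$ be the tree with vertex set $\{r\}\cup\{v^i,v^i_1,\dots,v^i_{s(i)-1}: i\in I\}$ and edge set $\{\{v^i,v^i_j\}: i\in I,\,1\le j\le s(i)-1\}\cup\{\{r,v^i\}: i\in I\}$ (i.e., for each item a star with centre $v^i$ and $s(i)-1$ leaves, each centre joined to a root $r$). Then $(I,s,B,k)$ is a yes-instance of Exact Bin Packing if and only if the Collective Graph Exploration instance $(T,r,k,2B)$ is a yes-instance, i.e., there exist $k$ $r$-robot cycles in $T$, each of length at most $2B$, which together traverse every edge of $T$.
   Context: Exact Bin Packing: given a finite set $I$ of items, a positive size $s(i)\in\mathbb{N}$ for each $i\in I$, a positive integer $B$ and a positive integer $k$ with $\sum_{i\in I}s(i)=B\cdot k$, decide whether there is a partition of $I$ into disjoint sets $I_1,\dots,I_k$ with $\sum_{i\in I_j}s(i)=B$ for all $j$. A path in a graph is a sequence $(v_0,\dots,v_\ell)$ of vertices with consecutive vertices adjacent (repetitions allowed), of length $\ell$; a cycle is a path with $v_0=v_\ell$; an $r$-robot cycle is a cycle with $v_0=v_\ell=r$. The CGE instance $(G,v_{\mathsf{init}},k,B)$ is a yes-instance if there are $k$ $v_{\mathsf{init}}$-robot cycles, each of length at most $B$, such that every edge of $G$ is traversed by at least one of them. *)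

(* Defs.v *)
From mathcomp Require Import all_boot.
Set Implicit Arguments.
Unset Strict Implicit.
Unset Printing Implicit Defensive.

(* Exact Bin Packing: a partition of the items I into k (labelled) disjoint
   sets I_1..I_k, encoded by the assignment f : I -> 'I_k (item i goes to
   I_(f i)), each part having total size exactly B. *)
Definition exact_bin_packing (I : finType) (s : I -> nat) (B k : nat) : Prop :=
  exists f : I -> 'I_k, forall j : 'I_k, \sum_(i | f i == j) s i = B.

(* An r-robot cycle (v_0,...,v_l) with v_0 = v_l = r is encoded by the
   sequence p = [:: v_1; ...; v_l]; its length is l = size p. *)
Definition robot_cycle (V : eqType) (adj : rel V) (r : V) (p : seq V) : bool :=
  path adj r p && (last r p == r).

Definition cycle_length (V : eqType) (p : seq V) : nat := size p.

Definition traverses (V : eqType) (r : V) (p : seq V) (u v : V) : bool :=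
  ((u, v) \in zip (r :: p) p) || ((v, u) \in zip (r :: p) p).

Definition CGE_yes (V : eqType) (adj : rel V) (r : V) (k Bc : nat) : Prop :=
  exists W : 'I_k -> seq V,
    (forall j, robot_cycle adj r (W j) /\ cycle_length (W j) <= Bc) /\
    (forall u v, adj u v -> exists j, traverses r (W j) u v).

(* The tree T: vertices are None (= r) and Some (i; j) with j : 'I_(s i),
   where (i; 0) is the centre v^i and (i; j), 1 <= j <= s i - 1, is the leaf v^i_j. *)
Definition tree_vertex (I : finType) (s : I -> nat) : finType :=
  option {i : I & 'I_(s i)}.

Definition tree_adj (I : finType) (s : I -> nat) : rel (tree_vertex s) :=
  fun x y =>
  match x, y with
  | None, None => false
  | None, Some v => val (tagged v) == 0
  | Some v, None => val (tagged v) == 0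
  | Some u, Some v =>
      (tag u == tag v) && ((val (tagged u) == 0) != (val (tagged v) == 0))
  end.

Definition tree_root (I : finType) (s : I -> nat) : tree_vertex s := None.

(* Main.v *)
Require Import Defs.
From mathcomp Require Import all_boot zify.
Set Implicit Arguments. Unset Strict Implicit. Unset Printing Implicit Defensive.

Definition steps (V : eqType) (x : V) (p : seq V) : seq (V * V) := zip (x :: p) p.

Lemma steps_cons (V : eqType) (x y : V) p : steps x (y :: p) = (x, y) :: steps y p.
Proof. by []. Qed.

Lemma steps_nil (V : eqType) (x : V) : steps x [::] = [::].
Proof. by []. Qed.

Lemma steps_cat (V : eqType) (x : V) p q :
  steps x (p ++ q) = steps x p ++ steps (last x p) q.
Proof.
elim: p x => [|y p IH] x /=; first by [].
by rewrite !steps_cons IH.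
Qed.

Lemma size_steps (V : eqType) (x : V) p : size (steps x p) = size p.
Proof. by rewrite /steps size_zip /=; lia. Qed.

Lemma mem_steps1 (V : eqType) (x a b : V) p :
  (a, b) \in steps x p -> a \in x :: p.
Proof.
elim: p x => [|y p IH] x //=.
rewrite steps_cons in_cons => /orP [/eqP [] -> _|H]; first by rewrite in_cons eqxx.
by rewrite in_cons; apply/orP; right; apply: IH H.
Qed.

Definition incS (V : eqType) (S : pred V) : pred (V * V) :=
  fun st => (st.1 \notin S) && (st.2 \in S).
Definition outS (V : eqType) (S : pred V) : pred (V * V) :=
  fun st => (st.1 \in S) && (st.2 \notin S).

Lemma cut_count (V : eqType) (S : pred V) x p :
  count (incS S) (steps x p) + (x \in S) =
  count (outS S) (steps x p) + (last x p \in S).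
Proof.
elim: p x => [|y p IH] x; first by [].
rewrite steps_cons /= /incS /outS /=.
have := IH y; rewrite /incS /outS.
case: (x \in S); case: (y \in S) => /=; lia.
Qed.

Lemma reach_count (V : eqType) (S : pred V) x p :
  x \notin S -> has (fun v => v \in S) p -> 0 < count (incS S) (steps x p).
Proof.
elim: p x => [|y p IH] x Hx; first by [].
rewrite steps_cons /= /incS /= Hx /=.
case Hy: (y \in S) => //= H.
by have := IH y (negbT Hy) H; rewrite /incS; lia.
Qed.

Lemma steps_adj (V : eqType) (e : rel V) x p :
  path e x p -> all (fun st => e st.1 st.2) (steps x p).
Proof.
elim: p x => [|y p IH] x; first by [].
by rewrite steps_cons /= => /andP [-> /IH].
Qed.

Lemma sum_eq_pointwise (T : finType) (F G : T -> nat) :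
  (forall x, F x <= G x) -> \sum_x G x <= \sum_x F x -> forall x, F x = G x.
Proof.
move=> H Hs x; apply/eqP; rewrite eqn_leq H /=; apply/negP => /negP.
rewrite -ltnNge => Hlt.
have : \sum_x F x < \sum_x G x.
  rewrite (bigD1 x) //= [X in _ < X](bigD1 x) //=.
  rewrite -addSn leq_add //; apply: leq_sum => y _; exact: H.
lia.
Qed.

Lemma sum_disj_count (T : finType) (U : Type) (C : {pred T}) (e : T -> pred U) z :
  (forall c c' u, e c u -> e c' u -> c = c') ->
  \sum_(c in C) count (e c) z <= size z.
Proof.
move=> Hd; elim: z => [|u z IH] /=.
  by rewrite big1.
rewrite big_split /=.
suff : \sum_(c in C) e c u <= 1 by lia.
case: (pickP [pred c | (c \in C) && e c u]) => [c0 /andP [HC0 Hc0]|H0].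
  rewrite (bigD1 c0) //= Hc0 big1 // => c /andP [_ Hc].
  case He: (e c u) => //.
  by move: Hc; rewrite (Hd _ _ _ He Hc0) eqxx.
rewrite big1 // => c HC.
by have := H0 c; rewrite /= HC /= => ->.
Qed.

Definition ctr (I : finType) (s : I -> nat) (hs : forall i, 0 < s i) (i : I)
  : {i : I & 'I_(s i)} := Tagged (fun i => 'I_(s i)) (Ordinal (hs i)).

Definition vl (I : finType) (s : I -> nat) (u : {i : I & 'I_(s i)}) : nat :=
  val (tagged u).

Definition parc (I : finType) (s : I -> nat) (hs : forall i, 0 < s i)
  (c : {i : I & 'I_(s i)}) : tree_vertex s :=
  if vl c == 0 then None else Some (ctr hs (tag c)).

Definition inS (I : finType) (s : I -> nat) (c : {i : I & 'I_(s i)})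
  : pred (tree_vertex s) :=
  fun v => match v with
  | None => false
  | Some w => (w == c) || ((vl c == 0) && (tag w == tag c)) end.

Lemma sigeq (I : finType) (s : I -> nat) (u v : {i : I & 'I_(s i)}) :
  tag u = tag v -> vl u = vl v -> u = v.
Proof.
case: u => i m; case: v => j n /= E; subst j => E.
by congr existT; apply: val_inj.
Qed.

Lemma sig_eqb (I : finType) (s : I -> nat) (u v : {i : I & 'I_(s i)}) :
  (u == v) = (tag u == tag v) && (vl u == vl v).
Proof.
apply/eqP/andP => [->|[/eqP h1 /eqP h2]]; first by rewrite !eqxx.
exact: sigeq.
Qed.

Lemma tag_ctr (I : finType) (s : I -> nat) (hs : forall i, 0 < s i) i : tag (@ctr I s hs i) = i.
Proof. by []. Qed.
Lemma vl_ctr (I : finType) (s : I -> nat) (hs : forall i, 0 < s i) i : vl (@ctr I s hs i) = 0.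
Proof. by []. Qed.

Lemma adj_sym (I : finType) (s : I -> nat) : symmetric (@tree_adj I s).
Proof.
case=> [a|]; case=> [b|] //=.
by rewrite eq_sym; congr andb; rewrite eq_sym.
Qed.

Lemma adj_par (I : finType) (s : I -> nat) (hs : forall i, 0 < s i) c :
  @tree_adj I s (parc hs c) (Some c).
Proof.
rewrite /parc; case: ifP => h /=; first by [].
by rewrite eqxx /= -/(vl c) h.
Qed.

Lemma vlE (I : finType) (s : I -> nat) (u : {i : I & 'I_(s i)}) :
  nat_of_ord (tagged u) = vl u.
Proof. by []. Qed.

Lemma in_tree (I : finType) (s : I -> nat) (hs : forall i, 0 < s i) c (a b : tree_vertex s) :
  tree_adj a b -> a \notin inS c -> b \in inS c -> a = parc hs c /\ b = Some c.
Proof.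
rewrite /parc /inS /in_mem /=.
case: a => [a|]; case: b => [b|] //=; rewrite ?sig_eqb ?vlE.
- move=> /andP [/eqP eab H1]; rewrite eab.
  case: (eqVneq (tag b) (tag c)) => [ebc|nbc]; last by rewrite /= !andbF.
  rewrite /= !andbT.
  case: (eqVneq (vl c) 0) => [hc|hc]; first by rewrite orbT.
  rewrite /= !orbF => ha /eqP hb; split; last by congr Some; apply: sigeq.
  congr Some; apply: sigeq; first by rewrite tag_ctr eab ebc.
  by rewrite vl_ctr; apply/eqP; move: H1; rewrite hb (negbTE hc); case: (vl a == 0).
- move=> /eqP hb _; case: (eqVneq (vl c) 0) => [hc|hc]; rewrite /= ?andbT ?andbF ?orbF.
  + move=> H; split => //; congr Some; apply: sigeq.
    * by case/orP: H => [/andP [/eqP ->]|/eqP].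
    * by rewrite hb hc.
  + by move=> /andP [_ /eqP E2]; move: hc; rewrite -E2 hb eqxx.
Qed.

Lemma out_tree (I : finType) (s : I -> nat) (hs : forall i, 0 < s i) c (a b : tree_vertex s) :
  tree_adj a b -> a \in inS c -> b \notin inS c -> a = Some c /\ b = parc hs c.
Proof.
move=> hab ha hb; rewrite adj_sym in hab.
by have [? ?] := in_tree hs hab hb ha.
Qed.

Lemma parc_notin (I : finType) (s : I -> nat) (hs : forall i, 0 < s i) c : parc hs c \notin @inS I s c.
Proof.
rewrite /parc; case: ifP => h //=.
by rewrite /in_mem /= sig_eqb tag_ctr vl_ctr eq_sym h andbF.
Qed.

Lemma self_in (I : finType) (s : I -> nat) c : Some c \in @inS I s c.
Proof. by rewrite /in_mem /= eqxx. Qed.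

Lemma parc_neq (I : finType) (s : I -> nat) (hs : forall i, 0 < s i) c : parc hs c != Some c.
Proof.
apply/eqP => E; have := parc_notin hs c; rewrite E.
by rewrite self_in.
Qed.

Definition Dn (I : finType) (s : I -> nat) (hs : forall i, 0 < s i) (p : seq (tree_vertex s)) c :=
  count (pred1 (parc hs c, Some c)) (steps None p).
Definition Un (I : finType) (s : I -> nat) (hs : forall i, 0 < s i) (p : seq (tree_vertex s)) c :=
  count (pred1 (Some c, parc hs c)) (steps None p).

Lemma D_eq_U (I : finType) (s : I -> nat) (hs : forall i, 0 < s i) (p : seq (tree_vertex s)) c :
  robot_cycle (@tree_adj I s) (tree_root s) p -> Dn hs p c = Un hs p c.
Proof.
case/andP => hp /eqP hl.
have hall := allP (steps_adj hp).
have E1 : count (incS (inS c)) (steps None p) = Dn hs p c.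
  apply: eq_in_count => st /hall; case: st => a b /= hab.
  rewrite /incS /=; apply/andP/eqP => [[ha hb]|[-> ->]].
    by have [-> ->] := in_tree hs hab ha hb.
  by rewrite parc_notin self_in.
have E2 : count (outS (inS c)) (steps None p) = Un hs p c.
  apply: eq_in_count => st /hall; case: st => a b /= hab.
  rewrite /outS /=; apply/andP/eqP => [[ha hb]|[-> ->]].
    by have [-> ->] := out_tree hs hab ha hb.
  by rewrite parc_notin self_in.
have := cut_count (inS c) None p.
rewrite E1 E2 /tree_root in hl *; rewrite hl /=.
by rewrite !addn0.
Qed.

Definition Cov (I : finType) (s : I -> nat) (hs : forall i, 0 < s i)
  (p : seq (tree_vertex s)) : {set {i : I & 'I_(s i)}} :=
  [set c | traverses (tree_root s) p (parc hs c) (Some c)].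

Lemma inCov (I : finType) (s : I -> nat) (hs : forall i, 0 < s i) p c :
  (c \in Cov hs p) = (0 < Dn hs p c) || (0 < Un hs p c).
Proof.
by rewrite inE /traverses /Dn /Un -!has_count !has_pred1.
Qed.

Lemma card_Cov (I : finType) (s : I -> nat) (hs : forall i, 0 < s i) p :
  robot_cycle (@tree_adj I s) (tree_root s) p -> 2 * #|Cov hs p| <= size p.
Proof.
move=> hc.
pose e c : pred (tree_vertex s * tree_vertex s) :=
  predU (pred1 (parc hs c, Some c)) (pred1 (Some c, parc hs c)).
have Hd : forall c c' u, e c u -> e c' u -> c = c'.
  move=> c c' u; rewrite /e /= => H1 H2.
  case/orP: H1 => /eqP E1; case/orP: H2 => /eqP E2; rewrite E1 in E2; case: E2.
  - by move=> _ ->.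
  - move=> H1 H2; move: H2; rewrite /parc; case: ifP => // h2 [] E.
    by move: H1; rewrite /parc E vl_ctr eqxx.
  - move=> H1 H2; move: H1; rewrite /parc; case: ifP => // h1 [] E.
    by move: H2; rewrite /parc E vl_ctr eqxx.
  - by move=> ->.
have := sum_disj_count (Cov hs p) (steps None p) Hd.
rewrite size_steps; apply: leq_trans.
rewrite -sum1_card big_distrr /=; apply: leq_sum => c hcov.
have := count_predUI (pred1 (parc hs c, Some c)) (pred1 (Some c, parc hs c)) (steps None p).
have -> : count (predI (pred1 (parc hs c, Some c)) (pred1 (Some c, parc hs c))) (steps None p) = 0.
  apply/eqP; rewrite -leqn0 leqNgt -has_count; apply/hasP => -[st _] /andP [/eqP -> /eqP [] E _].
  by move: (parc_neq hs c); rewrite E eqxx.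
have := D_eq_U hs c hc; move: hcov; rewrite inCov /Dn /Un /e.
rewrite addn0 /=.
set x := count _ _; set y := count _ _; set z := count _ _.
move=> H1 H2 ->; rewrite H2 in H1 *; rewrite orbb in H1; lia.
Qed.

Lemma cov_leaf (I : finType) (s : I -> nat) (hs : forall i, 0 < s i) p c :
  robot_cycle (@tree_adj I s) (tree_root s) p -> c \in Cov hs p ->
  ctr hs (tag c) \in Cov hs p.
Proof.
move=> hc hcov; have hDU := D_eq_U hs c hc.
have hD : 0 < Dn hs p c by move: hcov; rewrite inCov hDU orbb.
case: (eqVneq (vl c) 0) => h0.
  suff -> : ctr hs (tag c) = c by [].
  by apply: sigeq; rewrite ?tag_ctr ?vl_ctr.
move: hD; rewrite /Dn -has_count has_pred1 => /mem_steps1.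
rewrite /parc (negbTE h0) in_cons /= => hin.
have hD' : 0 < count (incS (inS (ctr hs (tag c)))) (steps None p).
  apply: reach_count => //; apply/hasP; exists (Some (ctr hs (tag c))) => //.
  exact: self_in.
case/andP: hc => hp _; have hall := allP (steps_adj hp).
rewrite inCov; apply/orP; left; move: hD'; rewrite /Dn -!has_count => /hasP [[a b] hst].
move=> /andP [ha hb]; apply/hasP; exists (a, b) => //=.
have /= hab := hall _ hst.
by have [-> ->] := in_tree hs hab ha hb.
Qed.


Lemma sum_sig1 (I : finType) (s : I -> nat) (P : pred I) :
  \sum_(c : {i : I & 'I_(s i)} | P (tag c)) 1 = \sum_(i | P i) s i.
Proof.
symmetry.
rewrite (eq_bigr (fun i => \sum_(m : 'I_(s i) | true) 1)); last first.
  by move=> i _; rewrite sum1_card card_ord.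
rewrite (sig_big_dep (op := addn) P (fun i (_ : 'I_(s i)) => true) (fun _ _ => 1)).
by apply: eq_bigl => c; rewrite andbT.
Qed.

Lemma cge_to_pack (I : finType) (s : I -> nat) (B k : nat)
  (hs : forall i, 0 < s i) (hk : 0 < k)
  (hsum : \sum_(i : I) s i = B * k) :
  CGE_yes (@tree_adj I s) (tree_root s) k (2 * B) -> exact_bin_packing s B k.
Proof.
case=> W [HW Hcov].
pose C j := Cov hs (W j).
have Hle j : #|C j| <= B.
  have [h1 h2] := HW j; have := card_Cov hs h1; rewrite /cycle_length in h2; rewrite /C; lia.
have Hin c : exists j, c \in C j.
  have [j hj] := Hcov _ _ (adj_par hs c).
  by exists j; rewrite inE.
pose J c := [set j | c \in C j].
have Hdc : \sum_j #|C j| = \sum_c #|J c|.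
  have E1 : forall j, #|C j| = \sum_c (c \in C j : nat).
    by move=> j; rewrite -sum1_card big_mkcond.
  have E2 : forall c, #|J c| = \sum_j (c \in C j : nat).
    by move=> c; rewrite -sum1_card big_mkcond; apply: eq_bigr => j _; rewrite inE.
  rewrite (eq_bigr _ (fun j _ => E1 j)) (eq_bigr _ (fun c _ => E2 c)).
  exact: exchange_big.
have HJ1 c : 0 < #|J c|.
  by have [j hj] := Hin c; apply/card_gt0P; exists j; rewrite inE.
have Hall1 : \sum_(c : {i : I & 'I_(s i)}) 1 = B * k.
  by rewrite -hsum; exact: (sum_sig1 s xpredT).
have HkB : \sum_(j < k) B = B * k by rewrite sum_nat_const card_ord mulnC.
have HC : forall j, #|C j| = B.
  apply: sum_eq_pointwise => //; rewrite HkB Hdc -Hall1.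
  by apply: leq_sum => c _; exact: HJ1.
have HJ : forall c, 1 = #|J c|.
  apply: sum_eq_pointwise => //; rewrite Hall1 -Hdc -HkB.
  by apply: leq_sum => j _; exact: Hle.
pose f i := odflt (Ordinal hk) [pick j in J (ctr hs i)].
have Hf : forall c j, c \in C j -> j = f (tag c).
  move=> c j hcj; have hct := cov_leaf (proj1 (HW j)) hcj.
  have /cards1P [x hx] : #|J (ctr hs (tag c))| == 1 by rewrite -HJ.
  have : j \in J (ctr hs (tag c)) by rewrite inE.
  rewrite /f; case: pickP => [j' hj'|H0]; last by rewrite H0.
  by rewrite hx !inE in hj' * => /eqP ->; move/eqP: hj' => ->.
exists f => j; rewrite -(HC j) -sum_sig1 -sum1_card; apply: eq_bigl => c.
apply/idP/idP => [/eqP hfc|hc]; last by rewrite (Hf _ _ hc).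
have [j' hj'] := Hin c; have := Hf _ _ hj'; rewrite hfc => E; by rewrite -E.
Qed.

Definition leafv (I : finType) (s : I -> nat) (i : I) (m : 'I_(s i)) : tree_vertex s :=
  Some (Tagged (fun i => 'I_(s i)) m).
Definition cv (I : finType) (s : I -> nat) (hs : forall i, 0 < s i) (i : I)
  : tree_vertex s := Some (ctr hs i).
Definition lvs (I : finType) (s : I -> nat) (i : I) : seq 'I_(s i) :=
  [seq m <- enum 'I_(s i) | val m != 0].
Definition legs (I : finType) (s : I -> nat) (hs : forall i, 0 < s i) (i : I)
  (ms : seq 'I_(s i)) : seq (tree_vertex s) :=
  flatten [seq [:: leafv m; cv hs i] | m <- ms].
Definition seg (I : finType) (s : I -> nat) (hs : forall i, 0 < s i) (i : I)
  : seq (tree_vertex s) := cv hs i :: (legs hs (lvs s i) ++ [:: None]).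
Definition walk (I : finType) (s : I -> nat) (hs : forall i, 0 < s i)
  (l : seq I) : seq (tree_vertex s) := flatten (map (seg hs) l).

Lemma legs_path (I : finType) (s : I -> nat) (hs : forall i, 0 < s i) i ms :
  all (fun m : 'I_(s i) => val m != 0) ms ->
  path (@tree_adj I s) (cv hs i) (legs hs ms) && (last (cv hs i) (legs hs ms) == cv hs i).
Proof.
elim: ms => [|m ms IH] /=; first by rewrite eqxx.
case/andP => hm /IH /andP [h1 h2].
by rewrite /= h1 h2 eqxx /= hm andbT eq_sym hm.
Qed.

Lemma size_legs (I : finType) (s : I -> nat) (hs : forall i, 0 < s i) i ms :
  size (@legs I s hs i ms) = 2 * size ms.
Proof. by elim: ms => [|m ms IH] //=; rewrite IH; lia. Qed.

Lemma size_lvs (I : finType) (s : I -> nat) (hs : forall i, 0 < s i) i :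
  size (@lvs I s i) = (s i).-1.
Proof.
rewrite /lvs size_filter.
rewrite -(count_map val (fun x => x != 0)) val_enum_ord.
have := hs i; case: (s i) => [//|n] _ /=.
rewrite add0n -[RHS](size_iota 1 n) -count_predT; apply: eq_in_count => x.
by rewrite mem_iota; case: x.
Qed.

Lemma seg_path (I : finType) (s : I -> nat) (hs : forall i, 0 < s i) i :
  path (@tree_adj I s) None (seg hs i) && (last None (seg hs i) == None).
Proof.
have /andP [h1 h2] := legs_path hs (filter_all (fun m : 'I_(s i) => val m != 0) (enum 'I_(s i))).
by rewrite /seg /= -/(lvs s i) cat_path h1 /= (eqP h2) last_cat /=.
Qed.

Lemma walk_cons (I : finType) (s : I -> nat) (hs : forall i, 0 < s i) i l :
  @walk I s hs (i :: l) = seg hs i ++ walk hs l.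
Proof. by []. Qed.

Lemma walk_path (I : finType) (s : I -> nat) (hs : forall i, 0 < s i) l :
  path (@tree_adj I s) None (walk hs l) && (last None (walk hs l) == None).
Proof.
elim: l => [|i l IH]; first by []; rewrite walk_cons.
have /andP [h1 /eqP h2] := seg_path hs i.
by rewrite cat_path h1 last_cat h2.
Qed.

Lemma size_seg (I : finType) (s : I -> nat) (hs : forall i, 0 < s i) i :
  size (@seg I s hs i) = 2 * s i.
Proof.
rewrite /seg /= size_cat size_legs (size_lvs hs) /=.
have := hs i; lia.
Qed.

Lemma size_walk (I : finType) (s : I -> nat) (hs : forall i, 0 < s i) l :
  size (@walk I s hs l) = \sum_(i <- l) 2 * s i.
Proof.
elim: l => [|i l IH]; first by rewrite big_nil.
by rewrite big_cons walk_cons size_cat IH size_seg.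
Qed.

Lemma walk_steps (I : finType) (s : I -> nat) (hs : forall i, 0 < s i) l i st :
  i \in l -> st \in steps None (seg hs i) -> st \in steps None (walk hs l).
Proof.
elim: l => [|a l IH] //; rewrite in_cons => /orP [/eqP <-|hi] hst.
  by rewrite walk_cons steps_cat mem_cat hst.
rewrite walk_cons steps_cat mem_cat.
have /andP [_ /eqP ->] := seg_path hs a.
by rewrite IH ?orbT.
Qed.

Lemma seg_root (I : finType) (s : I -> nat) (hs : forall i, 0 < s i) i :
  (None, cv hs i) \in steps None (@seg I s hs i).
Proof. by rewrite /seg steps_cons mem_head. Qed.

Lemma legs_steps (I : finType) (s : I -> nat) (hs : forall i, 0 < s i) i ms m :
  m \in ms -> (cv hs i, leafv m) \in steps (cv hs i) (@legs I s hs i ms).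
Proof.
elim: ms => [|a ms IH] //; rewrite in_cons => /orP [/eqP ->|hm].
  by rewrite /legs /= steps_cons mem_head.
rewrite /legs /= !steps_cons !in_cons -/(legs hs ms) IH ?orbT //.
Qed.

Lemma seg_leaf (I : finType) (s : I -> nat) (hs : forall i, 0 < s i) i (m : 'I_(s i)) :
  val m != 0 -> (cv hs i, leafv m) \in steps None (@seg I s hs i).
Proof.
move=> hm; rewrite /seg steps_cons in_cons steps_cat mem_cat legs_steps ?orbT //.
by rewrite /lvs mem_filter hm mem_enum.
Qed.

Lemma sig_eta (I : finType) (s : I -> nat) (b : {i : I & 'I_(s i)}) :
  b = Tagged (fun i => 'I_(s i)) (tagged b).
Proof. by case: b. Qed.

Lemma travE (V : eqType) (r : V) p u v :
  traverses r p u v = ((u, v) \in steps r p) || ((v, u) \in steps r p).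
Proof. by []. Qed.

Lemma pack_to_cge (I : finType) (s : I -> nat) (B k : nat)
  (hs : forall i, 0 < s i) :
  exact_bin_packing s B k -> CGE_yes (@tree_adj I s) (tree_root s) k (2 * B).
Proof.
case=> f Hf.
pose W j := walk hs [seq i <- index_enum I | f i == j].
have Hmem : forall i st, st \in steps None (seg hs i) -> st \in steps None (W (f i)).
  move=> i st hst; apply: walk_steps hst.
  by rewrite mem_filter eqxx mem_index_enum.
have Hctr : forall w : {i : I & 'I_(s i)}, vl w = 0 -> Some w = cv hs (tag w).
  by move=> w hw; congr Some; apply: sigeq; rewrite ?tag_ctr ?vl_ctr.
have Hleaf : forall w : {i : I & 'I_(s i)}, Some w = leafv (tagged w).
  by move=> w; rewrite /leafv -sig_eta.
exists W; split.
  move=> j; split; first exact: walk_path.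
  rewrite /cycle_length size_walk big_filter -(Hf j) big_distrr.
  by [].
move=> [u|] [v|] //=.
- rewrite !vlE => /andP [/eqP et H].
  case: (eqVneq (vl u) 0) => hu.
  + exists (f (tag v)); rewrite travE; apply/orP; left.
    rewrite (Hctr u hu) et (Hleaf v); apply: Hmem; apply: seg_leaf.
    by move: H; rewrite hu eqxx /= -vlE.
  + have hv : vl v = 0 by apply/eqP; move: H; rewrite (negbTE hu); case: (vl v == 0).
    exists (f (tag u)); rewrite travE; apply/orP; right.
    rewrite (Hctr v hv) -et (Hleaf u); apply: Hmem; apply: seg_leaf.
    by rewrite -vlE in hu.
- rewrite vlE => /eqP hu; exists (f (tag u)); rewrite travE; apply/orP; right.
  by rewrite (Hctr u hu); apply: Hmem; apply: seg_root.
- rewrite vlE => /eqP hv; exists (f (tag v)); rewrite travE; apply/orP; left.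
  by rewrite (Hctr v hv); apply: Hmem; apply: seg_root.
Qed.

Theorem mainTheorem12 (I : finType) (s : I -> nat) (B k : nat)
  (hs : forall i, 0 < s i) (hB : 0 < B) (hk : 0 < k)
  (hsum : \sum_(i : I) s i = B * k) :
  exact_bin_packing s B k <->
  CGE_yes (@tree_adj I s) (tree_root s) k (2 * B).
Proof.
split; first exact: pack_to_cge.
exact: cge_to_pack.
Qed.
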